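(* Let $\triangle ABC$ be a nondegenerate triangle circumscribed about a central conic such that either the center of the conic or one of its foci coincides with the circumcenter of $\triangle ABC$. Then $\triangle ABC$ has no right angle.
   Context: A central conic is a non-degenerate ellipse or hyperbola. A triangle is circumscribed about a conic if each of its three sidelines is tangent to the conic. *)

(* Defs.v *)
From HB Require Import structures.
From mathcomp Require Import all_boot all_order all_algebra.
From mathcomp Require Import reals.
Set Implicit Arguments. Unset Strict Implicit. Unset Printing Implicit Defensive.
Import Order.TTheory GRing.Theory Num.Theory.
Local Open Scope ring_scope.

Section Plane.
Variable R : realType.
Definition pt := (R * R)%type.

Definition psub (P Q : pt) : pt := (P.1 - Q.1, P.2 - Q.2).
Definition padd (P Q : pt) : pt := (P.1 + Q.1, P.2 + Q.2).
Definition pscale (k : R) (P : pt) : pt := (k * P.1, k * P.2).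
Definition dot (P Q : pt) : R := P.1 * Q.1 + P.2 * Q.2.
Definition cross (P Q : pt) : R := P.1 * Q.2 - P.2 * Q.1.
Definition perp (u : pt) : pt := (- u.2, u.1).
Definition dist2 (P Q : pt) : R := dot (psub P Q) (psub P Q).

Definition tri_nondegenerate (A B C : pt) : Prop := cross (psub B A) (psub C A) != 0.

Definition is_circumcenter (O A B C : pt) : Prop :=
  dist2 O A = dist2 O B /\ dist2 O B = dist2 O C.

(* A central conic is given by a center c, a unit axis direction u,
   semi-axes a, b > 0, and a flag hyp (false = ellipse, true = hyperbola). *)
Definition central_conic (c u : pt) (a b : R) (hyp : bool) : Prop :=
  dot u u = 1 /\ 0 < a /\ 0 < b.

Definition csign (hyp : bool) : R := if hyp then -1 else 1.

Definition on_conic (c u : pt) (a b : R) (hyp : bool) (X : pt) : Prop :=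
  let x := dot (psub X c) u in
  let y := dot (psub X c) (perp u) in
  x ^+ 2 / a ^+ 2 + csign hyp * (y ^+ 2 / b ^+ 2) = 1.

(* The line through P with direction d is the tangent line to the conic at
   the conic point P: d is orthogonal to the gradient of the equation at P. *)
Definition tangent_at (c u : pt) (a b : R) (hyp : bool) (P d : pt) : Prop :=
  on_conic c u a b hyp P /\
  (dot (psub P c) u) * (dot d u) / a ^+ 2
    + csign hyp * ((dot (psub P c) (perp u)) * (dot d (perp u)) / b ^+ 2) = 0.

Definition line_tangent (c u : pt) (a b : R) (hyp : bool) (P Q : pt) : Prop :=
  exists t : R, tangent_at c u a b hyp (padd P (pscale t (psub Q P))) (psub Q P).

Definition is_focus (c u : pt) (a b : R) (hyp : bool) (F : pt) : Prop :=
  if hyp then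
    F = padd c (pscale (Num.sqrt (a ^+ 2 + b ^+ 2)) u) \/
    F = padd c (pscale (- Num.sqrt (a ^+ 2 + b ^+ 2)) u)
  else if b <= a then
    F = padd c (pscale (Num.sqrt (a ^+ 2 - b ^+ 2)) u) \/
    F = padd c (pscale (- Num.sqrt (a ^+ 2 - b ^+ 2)) u)
  else
    F = padd c (pscale (Num.sqrt (b ^+ 2 - a ^+ 2)) (perp u)) \/
    F = padd c (pscale (- Num.sqrt (b ^+ 2 - a ^+ 2)) (perp u)).

Definition has_right_angle (A B C : pt) : Prop :=
  dot (psub B A) (psub C A) = 0 \/
  dot (psub A B) (psub C B) = 0 \/
  dot (psub A C) (psub B C) = 0.
End Plane.

(* Main.v *)
Require Import Defs.
From HB Require Import structures.
From mathcomp Require Import all_boot all_order all_algebra.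
From mathcomp Require Import reals ring lra.
Import Order.TTheory GRing.Theory Num.Theory.
Local Open Scope ring_scope.

Lemma no_tangent (R : realType) (c u P d : pt R) (a b : R) (hyp : bool) (l : R) :
  central_conic c u a b hyp -> tangent_at c u a b hyp P d ->
  (padd P (pscale l d) = c \/ is_focus c u a b hyp (padd P (pscale l d))) -> False.
Proof.
move=> [uu [a0 b0]] [on tan].
move: uu on tan.
case: c => c1 c2; case: u => u1 u2; case: P => p1 p2; case: d => d1 d2.
rewrite /on_conic /dot /psub /perp /padd /pscale /is_focus /=.
set p := (p1 - c1) * u1 + (p2 - c2) * u2.
set q := (p1 - c1) * - u2 + (p2 - c2) * u1.
set xd := d1 * u1 + d2 * u2.
set yd := d1 * - u2 + d2 * u1.
move=> uu on tan.
have a2 : a ^+ 2 != 0 by rewrite expf_neq0 // gt_eqF.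
have b2 : b ^+ 2 != 0 by rewrite expf_neq0 // gt_eqF.
have a2p : 0 < a ^+ 2 by rewrite exprn_gt0.
have b2p : 0 < b ^+ 2 by rewrite exprn_gt0.
have an : a != 0 by rewrite gt_eqF.
have bn : b != 0 by rewrite gt_eqF.
have h1 : p ^+ 2 * b ^+ 2 + csign R hyp * q ^+ 2 * a ^+ 2 = a ^+ 2 * b ^+ 2.
  move: on => /(congr1 (fun z => z * (a ^+ 2 * b ^+ 2))); rewrite mul1r => <-; by field; rewrite ?an ?bn.
have h2 : p * xd * b ^+ 2 + csign R hyp * q * yd * a ^+ 2 = 0.
  move: tan => /(congr1 (fun z => z * (a ^+ 2 * b ^+ 2))); rewrite mul0r => <-; by field; rewrite ?an ?bn.
have key : forall x y, (p1 + l * d1, p2 + l * d2) = (c1 + (x * u1 + y * - u2), c2 + (x * u2 + y * u1)) ->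
   p * x * b ^+ 2 + csign R hyp * q * y * a ^+ 2 = a ^+ 2 * b ^+ 2.
  move=> x y [e1 e2].
  have ex : p + l * xd = x.
    rewrite /p /xd; have -> : x = x * (u1 * u1 + u2 * u2) by rewrite uu mulr1.
    have -> : x * (u1 * u1 + u2 * u2) = (x * u1 + y * - u2) * u1 + (x * u2 + y * u1) * u2 by ring.
    have -> : x * u1 + y * - u2 = p1 + l * d1 - c1 by rewrite e1; ring.
    have -> : x * u2 + y * u1 = p2 + l * d2 - c2 by rewrite e2; ring.
    ring.
  have ey : q + l * yd = y.
    rewrite /q /yd; have -> : y = y * (u1 * u1 + u2 * u2) by rewrite uu mulr1.
    have -> : y * (u1 * u1 + u2 * u2) = (x * u1 + y * - u2) * - u2 + (x * u2 + y * u1) * u1 by ring.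
    have -> : x * u1 + y * - u2 = p1 + l * d1 - c1 by rewrite e1; ring.
    have -> : x * u2 + y * u1 = p2 + l * d2 - c2 by rewrite e2; ring.
    ring.
  rewrite -ex -ey -h1 -[RHS]addr0 -(mulr0 l) -h2; ring.
rewrite /padd /pscale /perp /=.
have ab : 0 < a ^+ 2 * b ^+ 2 by rewrite mulr_gt0.
case=> [HX|].
  have := key 0 0; rewrite !(mul0r, mulr0, addr0, add0r) => /(_ HX) /eqP.
  by rewrite eq_sym gt_eqF.
have kx : forall k, (p1 + l * d1, p2 + l * d2) = (c1 + k * u1, c2 + k * u2) ->
    p * k * b ^+ 2 = a ^+ 2 * b ^+ 2.
  move=> k; have := key k 0; rewrite !(mul0r, mulr0, addr0) => H E; exact: H.
have ky : forall k, (p1 + l * d1, p2 + l * d2) = (c1 + k * - u2, c2 + k * u1) ->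
    csign R hyp * q * k * a ^+ 2 = a ^+ 2 * b ^+ 2.
  move=> k; have := key 0 k; rewrite !(mul0r, mulr0, addr0, add0r) => H E; exact: H.
have q2 : 0 <= q ^+ 2 by rewrite sqr_ge0.
have p2' : 0 <= p ^+ 2 by rewrite sqr_ge0.
clear key h2 tan on.
case: hyp kx ky h1 => /= kx ky h1.
  have f0 : 0 <= a ^+ 2 + b ^+ 2 by rewrite addr_ge0 // ltW.
  have f2 := sqr_sqrtr f0.
  move: (Num.sqrt _) f2 => f f2.
  have E : forall k, k ^+ 2 = f ^+ 2 -> p * k * b ^+ 2 = a ^+ 2 * b ^+ 2 -> False.
    move=> k k2 E.
    have pk : p * k = a ^+ 2 by apply: (mulIf b2); rewrite E.
    have : p ^+ 2 * (a ^+ 2 + b ^+ 2) = a ^+ 2 * a ^+ 2 by rewrite -f2 -k2 -pk; ring.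
    move: h1; rewrite /csign; nra.
  by case=> /kx; [apply: E | apply: E; rewrite sqrrN].
case: leP => ba.
  have f0 : 0 <= a ^+ 2 - b ^+ 2 by rewrite subr_ge0 lerXn2r // ?nnegrE ltW.
  have f2 := sqr_sqrtr f0.
  move: (Num.sqrt _) f2 => f f2.
  have E : forall k, k ^+ 2 = f ^+ 2 -> p * k * b ^+ 2 = a ^+ 2 * b ^+ 2 -> False.
    move=> k k2 E.
    have pk : p * k = a ^+ 2 by apply: (mulIf b2); rewrite E.
    have : p ^+ 2 * (a ^+ 2 - b ^+ 2) = a ^+ 2 * a ^+ 2 by rewrite -f2 -k2 -pk; ring.
    move: h1 f0; rewrite /csign; nra.
  by case=> /kx; [apply: E | apply: E; rewrite sqrrN].
have f0 : 0 <= b ^+ 2 - a ^+ 2 by rewrite subr_ge0 lerXn2r // ?nnegrE ltW.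
have f2 := sqr_sqrtr f0.
move: (Num.sqrt _) f2 => f f2.
have E : forall k, k ^+ 2 = f ^+ 2 -> csign R false * q * k * a ^+ 2 = a ^+ 2 * b ^+ 2 -> False.
  move=> k k2; rewrite /csign mul1r => E.
  have pk : q * k = b ^+ 2 by apply: (mulIf a2); rewrite E mulrC.
  have : q ^+ 2 * (b ^+ 2 - a ^+ 2) = b ^+ 2 * b ^+ 2 by rewrite -f2 -k2 -pk; ring.
  move: h1 f0; rewrite /csign; nra.
by case=> /ky; [apply: E | apply: E; rewrite sqrrN].
Qed.
Lemma thales (R : realType) (A B C O : pt R) :
  tri_nondegenerate A B C -> is_circumcenter O A B C ->
  dot (psub A C) (psub B C) = 0 -> O = padd A (pscale (1/2) (psub B A)).
Proof.
case: A => a1 a2; case: B => b1 b2; case: C => c1 c2; case: O => o1 o2.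
rewrite /tri_nondegenerate /is_circumcenter /dist2 /cross /dot /psub /padd /pscale /=.
move=> nd [e1 e2] rc.
set e1' := o1 - (a1 + b1) / 2.
set e2' := o2 - (a2 + b2) / 2.
have q1 : e1' * (b1 - a1) + e2' * (b2 - a2) = 0.
  have -> : e1' * (b1 - a1) + e2' * (b2 - a2) = (((o1 - a1) * (o1 - a1) + (o2 - a2) * (o2 - a2)) - ((o1 - b1) * (o1 - b1) + (o2 - b2) * (o2 - b2))) / 2.
    by rewrite /e1' /e2'; field.
  lra.
have q2 : e1' * (c1 - a1) + e2' * (c2 - a2) = 0.
  have -> : e1' * (c1 - a1) + e2' * (c2 - a2) = (((o1 - a1) * (o1 - a1) + (o2 - a2) * (o2 - a2)) - ((o1 - c1) * (o1 - c1) + (o2 - c2) * (o2 - c2)) + ((a1 - c1) * (b1 - c1) + (a2 - c2) * (b2 - c2))) / 2.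
    by rewrite /e1' /e2'; field.
  lra.
set D := (b1 - a1) * (c2 - a2) - (b2 - a2) * (c1 - a1).
have z1 : e1' * D = 0.
  have -> : e1' * D = (c2 - a2) * (e1' * (b1 - a1) + e2' * (b2 - a2)) - (b2 - a2) * (e1' * (c1 - a1) + e2' * (c2 - a2)) by rewrite /D; ring.
  by rewrite q1 q2; ring.
have z2 : e2' * D = 0.
  have -> : e2' * D = (b1 - a1) * (e1' * (c1 - a1) + e2' * (c2 - a2)) - (c1 - a1) * (e1' * (b1 - a1) + e2' * (b2 - a2)) by rewrite /D; ring.
  by rewrite q1 q2; ring.
move/eqP: z1; rewrite mulf_eq0 (negbTE nd) orbF /e1' subr_eq => /eqP ->.
move/eqP: z2; rewrite mulf_eq0 (negbTE nd) orbF /e2' subr_eq => /eqP ->.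
congr (_, _); by field.
Qed.

Lemma at_C (R : realType) (A B C O c u : pt R) (a b : R) (hyp : bool) :
  tri_nondegenerate A B C -> central_conic c u a b hyp ->
  line_tangent c u a b hyp A B -> is_circumcenter O A B C ->
  (O = c \/ is_focus c u a b hyp O) ->
  dot (psub A C) (psub B C) = 0 -> False.
Proof.
move=> nd cc [t tg] ci HO rc.
have EO := @thales R A B C O nd ci rc.
apply: (@no_tangent R c u _ _ a b hyp (1/2 - t) cc tg).
have -> : padd (padd A (pscale t (psub B A))) (pscale (1 / 2 - t) (psub B A)) = O.
  rewrite EO; case: A B {EO nd tg ci rc} => [a1 a2] [b1 b2].
  rewrite /padd /pscale /psub /=; congr (_, _); ring.
exact: HO.
Qed.

Theorem proposition2p2 (R : realType) (A B C O c u : pt R) (a b : R) (hyp : bool) :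
  tri_nondegenerate A B C ->
  central_conic c u a b hyp ->
  line_tangent c u a b hyp A B ->
  line_tangent c u a b hyp B C ->
  line_tangent c u a b hyp C A ->
  is_circumcenter O A B C ->
  (O = c \/ is_focus c u a b hyp O) ->
  ~ has_right_angle A B C.
Proof.
move=> nd cc tAB tBC tCA [e1 e2] HO [rA | [rB | rC]].
- apply: (@at_C R B C A O c u a b hyp) => //.
  + move: nd; rewrite /tri_nondegenerate /cross /psub /=.
    case: A B C {tAB tBC tCA e1 e2 HO rA} => [a1 a2] [b1 b2] [c1 c2] /=.
    by congr (_ != _); ring.
  + by split; [|rewrite /is_circumcenter e1]; rewrite ?e2 ?e1.
- apply: (@at_C R C A B O c u a b hyp) => //.
  + move: nd; rewrite /tri_nondegenerate /cross /psub /=.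
    case: A B C {tAB tBC tCA e1 e2 HO rB} => [a1 a2] [b1 b2] [c1 c2] /=.
    by congr (_ != _); ring.
  + by split; rewrite ?e2 ?e1.
  + by move: rB; rewrite /dot => <-; ring.
- exact: (@at_C R A B C O c u a b hyp).
Qed.
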